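(* In the setting of the context, let $(S,E,I,R)$ be the functions defined there and set $\hat S(u)=S(\varphi(u))$, $\hat E(u)=E(\varphi(u))$, $\hat I(u)=I(\varphi(u))$, $\hat R(u)=R(\varphi(u))$ for $u\in(u_\infty,u_0]$. Then for $u\in(u_\infty,u_0)$ \[ \frac{d\hat S}{du}=\frac{\hat S(u)}{u},\quad \frac{d\hat E}{du}-\frac{\delta}{u\psi(u)}\hat E(u)=-\frac{\hat S(u)}{u},\quad \frac{d\hat I}{du}-\frac{\gamma}{\beta}\frac1u=-\frac{\delta}{u\psi(u)}\hat E(u),\quad \frac{d\hat R}{du}=-\frac{\gamma}{\beta}\frac1u, \] and $\hat S(u_0)=\tilde S$, $\hat E(u_0)=\tilde E$, $\hat I(u_0)=\tilde I$, $\hat R(u_0)=\tilde R$.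
   Context: Let $\beta,\gamma,\delta>0$ be constants and $\tilde S,\tilde E,\tilde I,\tilde R$ real numbers with $N:=\tilde S+\tilde E+\tilde I+\tilde R>0$. Standing assumptions: (A1) $\tilde I>0$; (A2) $\tilde E>(\gamma/\delta)\tilde I$; (A3) $\tilde S>\delta\tilde E/(\beta\tilde I)$; (A4) $\tilde R\ge 0$ and $N>\tilde S e^{(\beta/\gamma)\tilde R}+\tilde R$. Let $\alpha$ be the unique solution in $(\tilde R,N)$ of $x=N-\tilde S e^{(\beta/\gamma)\tilde R}e^{-(\beta/\gamma)x}$, and assume (A5) $\tilde S<(\gamma/\beta)e^{(\beta/\gamma)(\alpha-\tilde R)}$. Put $u_0:=e^{-(\beta/\gamma)\tilde R}$, $u_\infty:=e^{-(\beta/\gamma)\alpha}$. Let $\psi$ be the unique function, continuous and positive on $(u_\infty,u_0]$ and $C^1$ on $(u_\infty,u_0)$, satisfying $\psi'(u)\psi(u)-\frac{\gamma+\delta}{u}\psi(u)=-\delta\,\frac{\beta N-\beta\tilde S e^{(\beta/\gamma)\tilde R}u+\gamma\log u}{u}$ on $(u_\infty,u_0)$ and $\psi(u_0)=\beta\tilde I$. Let $\varphi(u):=\int_u^{u_0}\frac{d\xi}{\xi\psi(\xi)}$; $\varphi$ is a strictly decreasing continuous bijection from $(u_\infty,u_0]$ onto $[0,\infty)$, $C^1$ on $(u_\infty,u_0)$, with inverse $\varphi^{-1}:[0,\infty)\to(u_\infty,u_0]$. For $t\ge 0$ define $S(t)=\tilde S e^{(\beta/\gamma)\tilde R}\varphi^{-1}(t)$,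 $E(t)=\tilde E e^{-\delta t}+\tilde S e^{(\beta/\gamma)\tilde R}e^{-\delta t}\int_{\varphi^{-1}(t)}^{u_0}e^{\delta\varphi(v)}dv$, $I(t)=N-\tilde S e^{(\beta/\gamma)\tilde R}\varphi^{-1}(t)+\frac{\gamma}{\beta}\log\varphi^{-1}(t)-E(t)$, $R(t)=-\frac{\gamma}{\beta}\log\varphi^{-1}(t)$; this $(S,E,I,R)$ solves $S'=-\beta SI$, $E'=\beta SI-\delta E$, $I'=\delta E-\gamma I$, $R'=\gamma I$ ($t>0$) with $(S,E,I,R)(0)=(\tilde S,\tilde E,\tilde I,\tilde R)$. *)

(* Defs.v *)
From Stdlib Require Import Reals Lra ClassicalEpsilon.
From Coquelicot Require Import Coquelicot.
Open Scope R_scope.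

Definition Ntot (St Et It Rt : R) : R := St + Et + It + Rt.

Definition phi (psi : R -> R) (u0 u : R) : R :=
  RInt (fun xi => / (xi * psi xi)) u u0.

(* phi^{-1}(t): the (a) point u in (u_inf, u0] with phi(u) = t, chosen
   by Hilbert's epsilon (unique since phi is strictly decreasing). *)
Definition phiinv (psi : R -> R) (uinf u0 t : R) : R :=
  epsilon (inhabits 0) (fun u => uinf < u <= u0 /\ phi psi u0 u = t).


Definition Sfun (beta gamma delta St Et It Rt uinf u0 : R) (psi : R -> R) (t : R) : R :=
  St * exp (beta / gamma * Rt) * phiinv psi uinf u0 t.

Definition Efun (beta gamma delta St Et It Rt uinf u0 : R) (psi : R -> R) (t : R) : R :=
  Et * exp (- delta * t)
  + St * exp (beta / gamma * Rt) * exp (- delta * t)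
    * RInt (fun v => exp (delta * phi psi u0 v)) (phiinv psi uinf u0 t) u0.

Definition Ifun (beta gamma delta St Et It Rt uinf u0 : R) (psi : R -> R) (t : R) : R :=
  Ntot St Et It Rt - St * exp (beta / gamma * Rt) * phiinv psi uinf u0 t
  + gamma / beta * ln (phiinv psi uinf u0 t) - Efun beta gamma delta St Et It Rt uinf u0 psi t.

Definition Rfun (beta gamma delta St Et It Rt uinf u0 : R) (psi : R -> R) (t : R) : R :=
  - (gamma / beta) * ln (phiinv psi uinf u0 t).

(* Main.v *)
Require Import Defs.
From Stdlib Require Import Reals.
From Coquelicot Require Import Coquelicot.
Open Scope R_scope.
From Stdlib Require Import Lra ClassicalEpsilon.
Lemma min_lim a b x : a < b -> a < x ->
  filterlim (fun y => Rmin y b) (locally x)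
    (within (fun y => a < y <= b) (locally (Rmin x b))).
Proof.
intros Hab Hx P [eps HP].
assert (He : 0 < Rmin eps (x - a)) by (apply Rmin_glb_lt; [apply cond_pos| lra]).
exists (mkposreal _ He). intros y Hy. apply HP.
- unfold ball in *; simpl in *. unfold AbsRing_ball, abs, minus, plus, opp in *; simpl in *.
  assert (Hy1 : Rabs (y - x) < eps /\ Rabs (y - x) < x - a).
  { split; eapply Rlt_le_trans; eauto; [apply Rmin_l|apply Rmin_r]. }
  revert Hy1. unfold Rmin; destruct (Rle_dec y b); destruct (Rle_dec x b);
   unfold Rabs; repeat destruct Rcase_abs; lra.
- unfold ball in *; simpl in *. unfold AbsRing_ball, abs, minus, plus, opp in *; simpl in *.
  assert (Hy1 : Rabs (y - x) < x - a).
  { eapply Rlt_le_trans; eauto; apply Rmin_r. }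
  revert Hy1. unfold Rmin; destruct (Rle_dec y b);
   unfold Rabs; repeat destruct Rcase_abs; lra.
Qed.

Lemma cont_min (f : R -> R) a b x : a < b -> a < x ->
  (forall z, a < z <= b -> filterlim f (within (fun y => a < y <= b) (locally z)) (locally (f z))) ->
  continuous (fun y => f (Rmin y b)) x.
Proof.
intros Hab Hx Hf. unfold continuous.
eapply filterlim_comp. apply (min_lim a b x Hab Hx).
apply Hf. split. unfold Rmin; destruct Rle_dec; lra. apply Rmin_r.
Qed.

Lemma cont_min_id a b x : a < b -> a < x -> continuous (fun y => Rmin y b) x.
Proof.
intros Hab Hx. apply (cont_min (fun y => y) a b x Hab Hx).
intros z Hz P [e He]. exists e. intros y Hy _. now apply He.
Qed.

Lemma dE (P Q : R->R) u dP dQ Et K d: is_derive P u dP -> is_derive Q u dQ ->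
  is_derive (fun t => Et*exp(-d*P t) + K*exp(-d*P t)*Q t) u
   (Et*(exp(-d*P u)*(-d*dP)) + K*((exp(-d*P u)*(-d*dP))*Q u + exp(-d*P u)*dQ)).
Proof.
intros HP HQ. auto_derive.
- repeat split; eexists; eauto.
- change (Derive (fun x => P x) u) with (Derive P u); change (Derive (fun x => Q x) u) with (Derive Q u). rewrite (is_derive_unique _ _ _ HP), (is_derive_unique _ _ _ HQ). ring.
Qed.

Theorem theorem5
  (beta gamma delta St Et It Rt alpha : R) (psi : R -> R)
  (Hbeta : 0 < beta) (Hgamma : 0 < gamma) (Hdelta : 0 < delta)
  (HN : 0 < Ntot St Et It Rt)
  (A1 : 0 < It)
  (A2 : Et > gamma / delta * It)
  (A3 : St > delta * Et / (beta * It))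
  (A4a : 0 <= Rt)
  (A4b : Ntot St Et It Rt > St * exp (beta / gamma * Rt) + Rt)
  (Halpha_int : Rt < alpha < Ntot St Et It Rt)
  (Halpha_eq : alpha = Ntot St Et It Rt
                 - St * exp (beta / gamma * Rt) * exp (- (beta / gamma) * alpha))
  (A5 : St < gamma / beta * exp (beta / gamma * (alpha - Rt)))
  (* psi: continuous and positive on (u_inf, u0], C^1 on (u_inf, u0),
     solving the ODE there, with psi(u0) = beta * I~ *)
  (Hpsi_cont : forall u,
      exp (- (beta / gamma) * alpha) < u <= exp (- (beta / gamma) * Rt) ->
      filterlim psi
        (within (fun x => exp (- (beta / gamma) * alpha) < x
                          <= exp (- (beta / gamma) * Rt)) (locally u))
        (locally (psi u)))
  (Hpsi_pos : forall u,
      exp (- (beta / gamma) * alpha) < u <= exp (- (beta / gamma) * Rt) ->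
      0 < psi u)
  (Hpsi_C1 : forall u,
      exp (- (beta / gamma) * alpha) < u < exp (- (beta / gamma) * Rt) ->
      ex_derive psi u /\ continuous (Derive psi) u)
  (Hpsi_ode : forall u,
      exp (- (beta / gamma) * alpha) < u < exp (- (beta / gamma) * Rt) ->
      Derive psi u * psi u - (gamma + delta) / u * psi u
      = - delta * (beta * Ntot St Et It Rt
                   - beta * St * exp (beta / gamma * Rt) * u
                   + gamma * ln u) / u)
  (Hpsi_u0 : psi (exp (- (beta / gamma) * Rt)) = beta * It) :
  let u0 := exp (- (beta / gamma) * Rt) in
  let uinf := exp (- (beta / gamma) * alpha) in
  let Shat := fun u => Sfun beta gamma delta St Et It Rt uinf u0 psi (phi psi u0 u) in
  let Ehat := fun u => Efun beta gamma delta St Et It Rt uinf u0 psi (phi psi u0 u) in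
  let Ihat := fun u => Ifun beta gamma delta St Et It Rt uinf u0 psi (phi psi u0 u) in
  let Rhat := fun u => Rfun beta gamma delta St Et It Rt uinf u0 psi (phi psi u0 u) in
  (forall u, uinf < u < u0 ->
     (ex_derive Shat u /\ Derive Shat u = Shat u / u)
     /\ (ex_derive Ehat u /\
         Derive Ehat u - delta / (u * psi u) * Ehat u = - (Shat u / u))
     /\ (ex_derive Ihat u /\
         Derive Ihat u - gamma / beta * (1 / u) = - (delta / (u * psi u) * Ehat u))
     /\ (ex_derive Rhat u /\ Derive Rhat u = - (gamma / beta) * (1 / u)))
  /\ Shat u0 = St /\ Ehat u0 = Et /\ Ihat u0 = It /\ Rhat u0 = Rt.
Proof.
intros u0 uinf Shat Ehat Ihat Rhat.
assert (Hbg : 0 < beta / gamma) by (apply Rdiv_lt_0_compat; lra).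
assert (Huu : uinf < u0).
{ unfold uinf, u0. apply exp_increasing. nra. }
assert (Huinf : 0 < uinf) by apply exp_pos.
set (K := St * exp (beta / gamma * Rt)).
set (h := fun y => / (Rmin y u0 * psi (Rmin y u0))).
assert (Hmin : forall x, uinf < x -> uinf < Rmin x u0 <= u0).
{ intros x Hx. split. unfold Rmin; destruct Rle_dec; lra. apply Rmin_r. }
assert (Hhpos : forall x, uinf < x -> 0 < h x).
{ intros x Hx. unfold h. apply Rinv_0_lt_compat. specialize (Hmin x Hx).
  apply Rmult_lt_0_compat. lra. apply Hpsi_pos. exact Hmin. }
assert (Hhc : forall x, uinf < x -> continuous h x).
{ intros x Hx. unfold h. apply continuous_Rinv_comp.
  - apply (continuous_mult (fun y => Rmin y u0) (fun y => psi (Rmin y u0))).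
    + exact (cont_min_id uinf u0 x Huu Hx).
    + exact (cont_min psi uinf u0 x Huu Hx Hpsi_cont).
  - apply Rgt_not_eq. specialize (Hmin x Hx). apply Rmult_lt_0_compat. lra.
    apply Hpsi_pos. exact Hmin. }
assert (Hhi : forall a b, uinf < a -> uinf < b -> ex_RInt h a b).
{ intros a b Ha Hb. apply (ex_RInt_continuous (V:=R_CompleteNormedModule)). intros z Hz. apply Hhc.
  assert (uinf < Rmin a b) by (unfold Rmin; destruct Rle_dec; lra). lra. }
set (P := fun v => RInt h v u0).
assert (HP : forall v, uinf < v -> is_derive P v (- h v)).
{ intros v Hv. apply (is_derive_RInt' h P v u0).
  - assert (He : 0 < v - uinf) by lra. exists (mkposreal _ He). intros y Hy.
    apply (RInt_correct (V:=R_CompleteNormedModule) h y u0). apply Hhi; [|lra].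
    unfold ball in Hy; simpl in Hy. unfold AbsRing_ball, abs, minus, plus, opp in Hy; simpl in Hy.
    revert Hy. unfold Rabs; destruct Rcase_abs; lra.
  - apply Hhc; lra. }
assert (Hdec : forall x y, uinf < x < y -> P y < P x).
{ intros x y Hxy. unfold P.
  rewrite <- (RInt_Chasles h x y u0) by (apply Hhi; lra).
  assert (0 < RInt h x y).
  { apply RInt_gt_0. lra. intros z Hz; apply Hhpos; lra. intros z Hz; apply Hhc; lra. }
  change (plus (RInt h x y) (RInt h y u0)) with (RInt h x y + RInt h y u0). lra. }
assert (HphiP : forall v, uinf < v <= u0 -> phi psi u0 v = P v).
{ intros v Hv. unfold phi, P. apply RInt_ext. intros z Hz.
  rewrite Rmin_left in Hz by lra. rewrite Rmax_right in Hz by lra.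
  unfold h. rewrite Rmin_left by lra. reflexivity. }
assert (Hinv : forall x, uinf < x <= u0 -> phiinv psi uinf u0 (phi psi u0 x) = x).
{ intros x Hx. unfold phiinv.
  destruct (epsilon_spec (inhabits 0) (fun u => uinf < u <= u0 /\ phi psi u0 u = phi psi u0 x))
   as [Hy Heq]. { exists x; split; auto. }
  set (y := epsilon _ _) in *.
  rewrite (HphiP y Hy), (HphiP x Hx) in Heq.
  destruct (Rtotal_order x y) as [H|[H|H]]; auto.
  - pose proof (Hdec x y (conj (proj1 Hx) H)). lra.
  - pose proof (Hdec y x (conj (proj1 Hy) H)). lra. }
set (Q := fun v => RInt (fun w => exp (delta * P w)) v u0).
assert (HQ : forall v, uinf < v -> is_derive Q v (- exp (delta * P v))).
{ assert (Hc : forall w, uinf < w -> continuous (fun w => exp (delta * P w)) w).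
  { intros w Hw. apply (ex_derive_continuous (K:=R_AbsRing) (V:=R_NormedModule)). auto_derive. eexists. apply HP; lra. }
  intros v Hv. apply (is_derive_RInt' (fun w => exp (delta * P w)) Q v u0).
  - assert (He : 0 < v - uinf) by lra. exists (mkposreal _ He). intros y Hy.
    apply (RInt_correct (V:=R_CompleteNormedModule) (fun w => exp (delta * P w)) y u0). apply (ex_RInt_continuous (V:=R_CompleteNormedModule)). intros z Hz. apply Hc.
    unfold ball in Hy; simpl in Hy. unfold AbsRing_ball, abs, minus, plus, opp in Hy; simpl in Hy.
    assert (uinf < Rmin y u0). { revert Hy. unfold Rmin; destruct Rle_dec; unfold Rabs; destruct Rcase_abs; lra. }
    lra.
  - apply Hc; lra. }
assert (HQphi : forall t, uinf < t <= u0 ->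
   RInt (fun v => exp (delta * phi psi u0 v)) t u0 = Q t).
{ intros t Ht. unfold Q. apply RInt_ext. intros z Hz.
  rewrite Rmin_left in Hz by lra. rewrite Rmax_right in Hz by lra.
  rewrite HphiP by lra. reflexivity. }
assert (HS : forall t, uinf < t <= u0 -> Shat t = K * t).
{ intros t Ht. unfold Shat, Sfun. rewrite Hinv by auto. reflexivity. }
assert (HE : forall t, uinf < t <= u0 ->
   Ehat t = Et * exp (- delta * P t) + K * exp (- delta * P t) * Q t).
{ intros t Ht. unfold Ehat, Efun. rewrite Hinv, HQphi, HphiP by auto. reflexivity. }
assert (HI : forall t, uinf < t <= u0 ->
   Ihat t = Ntot St Et It Rt - K * t + gamma / beta * ln t - Ehat t).
{ intros t Ht. unfold Ihat, Ifun. rewrite Hinv by auto. reflexivity. }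
assert (HR : forall t, uinf < t <= u0 -> Rhat t = - (gamma / beta) * ln t).
{ intros t Ht. unfold Rhat, Rfun. rewrite Hinv by auto. reflexivity. }
assert (Hu0 : uinf < u0 <= u0) by lra.
assert (HP0 : P u0 = 0) by (unfold P; apply (RInt_point (V:=R_CompleteNormedModule))).
assert (HQ0 : Q u0 = 0) by (unfold Q; apply (RInt_point (V:=R_CompleteNormedModule))).
assert (Hln0 : ln u0 = - (beta / gamma) * Rt) by (unfold u0; apply ln_exp).
assert (HK0 : K * u0 = St).
{ unfold K, u0. rewrite Rmult_assoc, <- exp_plus.
  replace (beta / gamma * Rt + - (beta / gamma) * Rt) with 0 by ring. rewrite exp_0. ring. }
assert (HE0 : Ehat u0 = Et).
{ rewrite HE by auto. rewrite HP0, HQ0. replace (- delta * 0) with 0 by ring. rewrite exp_0. ring. }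
split.
2:{ split; [rewrite HS by auto; exact HK0|]. split; [exact HE0|]. split.
  - rewrite HI, HE0, Hln0, HK0 by auto. unfold Ntot. field. lra.
  - rewrite HR, Hln0 by auto. field. lra. }
intros u Hu.
assert (Hloc : forall (F G : R -> R), (forall t, uinf < t <= u0 -> F t = G t) ->
   locally u (fun t => G t = F t)).
{ intros F G HFG. assert (He : 0 < Rmin (u - uinf) (u0 - u)) by (apply Rmin_glb_lt; lra).
  exists (mkposreal _ He). intros y Hy. symmetry. apply HFG.
  unfold ball in Hy; simpl in Hy. unfold AbsRing_ball, abs, minus, plus, opp in Hy; simpl in Hy.
  assert (Rabs (y - u) < u - uinf /\ Rabs (y - u) < u0 - u).
  { split; eapply Rlt_le_trans; eauto; [apply Rmin_l|apply Rmin_r]. }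
  revert H. unfold Rabs; destruct Rcase_abs; lra. }
assert (Hu' : uinf < u <= u0) by lra.
assert (Hhu : h u = / (u * psi u)) by (unfold h; rewrite Rmin_left by lra; reflexivity).
assert (Hupos : 0 < u) by lra.
assert (Hpsiu : 0 < psi u) by (apply Hpsi_pos; exact Hu').
assert (DS : is_derive Shat u K).
{ apply (is_derive_ext_loc (fun t => K * t)). apply Hloc; auto.
  auto_derive; auto. ring. }
assert (DE : is_derive Ehat u
   (Et*(exp(-delta*P u)*(-delta*(- h u))) + K*((exp(-delta*P u)*(-delta*(- h u)))*Q u
     + exp(-delta*P u)*(- exp (delta * P u))))).
{ apply (is_derive_ext_loc (fun t => Et * exp (- delta * P t) + K * exp (- delta * P t) * Q t)).
  apply Hloc; auto. apply dE; [apply HP|apply HQ]; lra. }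
assert (Hee : exp (- delta * P u) * exp (delta * P u) = 1).
{ rewrite <- exp_plus. replace (- delta * P u + delta * P u) with 0 by ring. apply exp_0. }
assert (DI : is_derive Ihat u (- K + gamma / beta * (1 / u) -
   (Et*(exp(-delta*P u)*(-delta*(- h u))) + K*((exp(-delta*P u)*(-delta*(- h u)))*Q u
     + exp(-delta*P u)*(- exp (delta * P u)))))).
{ apply (is_derive_ext_loc (fun t => Ntot St Et It Rt - K * t + gamma / beta * ln t - Ehat t)).
  apply Hloc; auto.
  assert (Hl : is_derive (fun t => Ntot St Et It Rt - K * t + gamma / beta * ln t) u
     (- K + gamma / beta * (1 / u))).
  { auto_derive. lra. field. lra. }
  apply (is_derive_minus _ _ _ _ _ Hl DE). }
assert (DR : is_derive Rhat u (- (gamma / beta) * (1 / u))).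
{ apply (is_derive_ext_loc (fun t => - (gamma / beta) * ln t)). apply Hloc; auto.
  auto_derive. lra. field. lra. }
rewrite (HE u Hu') in *.
split; [|split; [|split]].
- split. eexists; exact DS. rewrite (is_derive_unique _ _ _ DS), HS by auto. field. lra.
- split. eexists; exact DE. rewrite (is_derive_unique _ _ _ DE), HS by auto.
  rewrite Hhu.
  replace (exp (- delta * P u) * - exp (delta * P u)) with (- (exp (- delta * P u) * exp (delta * P u))) by ring; rewrite Hee.
  field; repeat split; lra.
- split. eexists; exact DI. rewrite (is_derive_unique _ _ _ DI).
  rewrite Hhu.
  replace (exp (- delta * P u) * - exp (delta * P u)) with (- (exp (- delta * P u) * exp (delta * P u))) by ring; rewrite Hee.
  field; repeat split; lra.
- split. eexists; exact DR. exact (is_derive_unique _ _ _ DR).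
Qed.
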